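(* Let $r>1$, $0<a<r$ coprime, $\theta\in\Theta$ and $j\in\{0,\dots,r-1\}$. The representation $\mathcal F_j$ is $\theta$-stable (resp. $\theta$-semistable) if and only if $\theta(V_{i,j})>0$ (resp. $\ge0$) for every vertex $i$ for which $V_{i,j}$ is a non-empty proper subset of the vertices forming a subrepresentation of $\mathcal F_j$, and $\theta(W_{i,j})>0$ (resp. $\ge0$) for every vertex $i$ for which $W_{i,j}$ is a non-empty proper subset of the vertices forming a subrepresentation of $\mathcal F_j$.
   Context: Notation: for integers $s$ and $t>0$, $\langle s\rangle_t$ is the least non-negative integer congruent to $s$ modulo $t$. A pair of integers $(r,a)$ is admissible if $r\ge1$, $0\le a<r$, $\gcd(r,a)=1$ (so $a=0$ only for $r=1$). For admissible $(r,a)$ put $N(r,a)=\mathbb Z^3+\mathbb Z\cdot\frac1r(1,a,r-a)\subset\mathbb Q^3$; $e_1,e_2,e_3$ is the standard basis and $\Delta(r,a)$ the cone spanned by $e_1,e_2,e_3$. Let $b$ be an inverse of $a$ modulo $r$ and $p_i=\frac1r(\langle -ib\rangle_r,r-i,i)$, $i=0,\dots,r$ (so $p_0=e_2$, $p_r=e_3$, $p_{r-a}=\frac1r(1,a,r-a)$). For $r>1$ let $(r_L,a_L)=(r-a,\langle r\rangle_{r-a})$, $(r_R,a_R)=(a,\langle -r\rangle_a)$; there are lattice isomorphisms $L:N(r_L,a_L)\to N(r,a)$, $R:N(r_R,a_R)\to N(r,a)$ with $L(e_1)=e_1$, $L(e_2)=e_2$, $L(e_3)=p_{r-a}$, $R(e_1)=e_1$,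 $R(e_2)=p_{r-a}$, $R(e_3)=e_3$. The Danilov fan $\Sigma(r,a)$ is defined recursively: $\Sigma(1,0)$ is $\Delta(1,0)$ with its faces; for $r>1$, $\Sigma(r,a)$ consists of the cone spanned by $e_2,e_3,p_{r-a}$ with its faces, together with $L(\Sigma(r_L,a_L))$ and $R(\Sigma(r_R,a_R))$. The Danilov resolution $Y$ is the smooth toric variety of $\Sigma(r,a)$, with torus $T$; its rays are spanned by $e_1,p_0,\dots,p_r$; $D_i$ is the $T$-invariant prime divisor of the ray through $p_i$ and $E_j$ that of $e_j$. For a $3$-dimensional cone $\sigma$, $U_\sigma\cong\mathbb C^3$ is its affine chart; for $j=0,\dots,r-1$, $\sigma_j$ is the cone spanned by $p_j,p_{j+1},e_1$ (a cone of $\Sigma(r,a)$). The permutation $\tau(r,a,\cdot)$ of $\{0,\dots,r-1\}$: if $a\in\{1,r-1\}$, $\tau(r,a,i)=\langle ai-1\rangle_r$; otherwise $\tau(r,a,i)=\tau(r-a,\langle r\rangle_{r-a},\langle i\rangle_{r-a})$ for $i\ge a$ and $\tau(r,a,i)=(r-a)+\tau(a,\langle -r\rangle_a,i)$ for $i<a$; $\xi(r,a,\cdot)$ is its inverse. With indices mod $r$, on $Y$ define $Y_{i-a}=\sum_{k=0}^{\tau(r,a,i)}D_k$, $Z_i=\sum_{k=\tau(r,a,i)+1}^{r}D_k$ ($i=0,\dots,r-1$), and $X_0,\dots,X_{r-1}$ the unique divisors with $X_0=E_1$ and $X_i+Z_{i+1}=Z_i+X_{i-a}$; these satisfy $X_i+Y_{i+1}=Y_i+X_{i+a}$,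 $X_i+Z_{i+1}=Z_i+X_{i-a}$, $Y_i+Z_{i+a}=Z_i+Y_{i-a}$. The McKay quiver has vertices $0,\dots,r-1$ (mod $r$) and arrows $x_i:i\to i+1$, $y_i:i\to i+a$, $z_i:i\to i-a$; a representation assigns a complex number $V(\alpha)$ to each arrow with $V(y_{i+1})V(x_i)=V(x_{i+a})V(y_i)$, $V(z_{i+1})V(x_i)=V(x_{i-a})V(z_i)$, $V(y_{i-a})V(z_i)=V(z_{i+a})V(y_i)$. Subrepresentations of $V$ correspond to subsets $S$ of vertices such that whenever an arrow $\alpha$ has tail in $S$ and $V(\alpha)\ne0$, its head is in $S$. $\Theta=\{\theta\in\mathbb Q^r:\sum_i\theta_i=0\}$, $\theta(S)=\sum_{i\in S}\theta_i$; $V$ is $\theta$-stable (resp. semistable) if $\theta(S)>0$ (resp. $\ge0$) for all non-empty proper such $S$. The family $\mathcal F$ on $Y$ consists of the line bundles $\mathcal O(X_i),\mathcal O(Y_i),\mathcal O(Z_i)$ with their canonical sections; concretely, for $s\in U_\sigma$, each effective $T$-invariant divisor $D$ restricts on $U_\sigma$ to the divisor of a unique monomial $f_{\sigma,D}$ in the toric coordinates of $U_\sigma$, and $\mathcal F_s$ is the representation with $x_i,y_i,z_i$ represented by $f_{\sigma,X_i}(s),f_{\sigma,Y_i}(s),f_{\sigma,Z_i}(s)$. $\mathcal F_j$ denotes $\mathcal F_s$ for $s$ the $T$-fixed point of $U_{\sigma_j}$. For a vertex $i$ and $j\in\{0,\dots,r-1\}$: $V_{i,j}$ is the set of vertices $i,\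 i+(r-a),\ i+2(r-a),\dots$ (mod $r$) up to and including the first occurrence of $\xi(r,a,j)$; $W_{i,j}$ is the set of vertices $\xi(r,a,j)+(r-a),\ \xi(r,a,j)+2(r-a),\dots$ (mod $r$) up to and including the first occurrence of $i$. *)

(* Defs.v *)
From HB Require Import structures.
From mathcomp Require Import all_boot all_order all_algebra.
From mathcomp Require Import algC.
Set Implicit Arguments. Unset Strict Implicit. Unset Printing Implicit Defensive.
Import Order.TTheory GRing.Theory Num.Theory.

(* The permutation tau(r,a,.), computed with fuel (r strictly decreases). *)
Fixpoint tau_f (fuel r a i : nat) : nat :=
  match fuel with
  | 0 => 0
  | f.+1 =>
    if (a == 1) || (a == r.-1) then (a * i + r.-1) %% r   (* <a i - 1>_r *)
    else if a <= i then tau_f f (r - a) (r %% (r - a)) (i %% (r - a))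
    else (r - a) + tau_f f a ((a - r %% a) %% a) i      (* <-r>_a *)
  end.

Definition tau (r a i : nat) : nat := tau_f r r a i.

Definition xi (r a j : nat) : nat := find (fun i => tau r a i == j) (iota 0 r).

(* T-invariant divisors on Y: integer coefficients on the rays;
   None = ray of e_1 (divisor E_1), Some k = ray of p_k (divisor D_k), 0<=k<=r.
   (E_2 = D_0, E_3 = D_r.) *)
Definition divisor := option nat -> int.

Definition Zdiv (r a i : nat) : divisor := fun rho =>
  match rho with
  | None => Posz 0
  | Some k => Posz (nat_of_bool ((tau r a (i %% r) < k) && (k <= r)))
  end.

(* Y_m = sum_{k=0}^{tau(m+a)} D_k  (from Y_{i-a} = sum_{k=0}^{tau(i)} D_k) *)
Definition Ydiv (r a m : nat) : divisor := fun rho =>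
  match rho with
  | None => Posz 0
  | Some k => Posz (nat_of_bool (k <= tau r a ((m + a) %% r)))
  end.

Definition nX (r a i : nat) : nat :=
  find (fun k => (k * a) %% r == i %% r) (iota 0 r).

(* X_i: the unique solution of X_0 = E_1, X_i + Z_{i+1} = Z_i + X_{i-a},
   i.e. X_{n a} = E_1 + sum_{m=1}^{n} (Z_{m a} - Z_{m a + 1}). *)
Definition Xdiv (r a i : nat) : divisor := fun rho =>
  (Posz (nat_of_bool (rho == None))
   + \sum_(1 <= m < (nX r a i).+1) (Zdiv r a (m * a) rho - Zdiv r a (m * a + 1) rho))%R.

(* Value at the T-fixed point of U_{sigma_j} (sigma_j = cone(p_j, p_{j+1}, e_1))
   of the monomial f_{sigma_j, D}: the monomial is prod of the coordinates of
   the rays of sigma_j raised to the coefficients of D on these rays; at the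
   origin it equals 1 iff all these exponents vanish, and 0 otherwise. *)
Definition fixval (D : divisor) (j : nat) : algC :=
  if [&& D None == 0%R, D (Some j) == 0%R & D (Some j.+1) == 0%R] then 1%R else 0%R.

Record mckay_rep := MckayRep {
  rep_x : nat -> algC;
  rep_y : nat -> algC;
  rep_z : nat -> algC }.

Definition Frep (r a j : nat) : mckay_rep :=
  MckayRep (fun i => fixval (Xdiv r a i) j)
           (fun i => fixval (Ydiv r a i) j)
           (fun i => fixval (Zdiv r a i) j).

Definition is_subrep (r a : nat) (V : mckay_rep) (S : {set 'I_r}) : Prop :=
  forall i k : 'I_r, i \in S ->
    ((rep_x V i != 0%R /\ val k = (i + 1) %% r) \/
     (rep_y V i != 0%R /\ val k = (i + a) %% r) \/
     (rep_z V i != 0%R /\ val k = (i + (r - a)) %% r)) -> k \in S.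

Definition theta_of (r : nat) (theta : 'I_r -> rat) (S : {set 'I_r}) : rat :=
  (\sum_(i in S) theta i)%R.

Definition stable (r a : nat) (theta : 'I_r -> rat) (V : mckay_rep) : Prop :=
  forall S : {set 'I_r}, S != set0 -> S != setT -> is_subrep a V S ->
    (0 < theta_of theta S)%R.

Definition semistable (r a : nat) (theta : 'I_r -> rat) (V : mckay_rep) : Prop :=
  forall S : {set 'I_r}, S != set0 -> S != setT -> is_subrep a V S ->
    (0 <= theta_of theta S)%R.

Definition Vset (r a : nat) (i j : nat) : {set 'I_r} :=
  let x := xi r a j in
  let M := find (fun m => (i + m * (r - a)) %% r == x) (iota 0 r) in
  [set k : 'I_r | [exists m : 'I_M.+1, val k == (i + m * (r - a)) %% r]].

Definition Wset (r a : nat) (i j : nat) : {set 'I_r} :=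
  let x := xi r a j in
  let M := (find (fun m => (x + m.+1 * (r - a)) %% r == i) (iota 0 r)).+1 in
  [set k : 'I_r | [exists m : 'I_M, val k == (x + m.+1 * (r - a)) %% r]].

(* Main.v *)
Require Import Defs.
From HB Require Import structures.
From mathcomp Require Import all_boot all_order all_algebra.
From mathcomp Require Import algC zify.
Set Implicit Arguments. Unset Strict Implicit. Unset Printing Implicit Defensive.

Lemma gcd_sub r a : a <= r -> gcdn a (r - a) = gcdn a r.
Proof. by move=> h; rewrite -gcdnDr subnK. Qed.

Lemma cop_sub r a : a <= r -> coprime r a -> coprime r (r - a).
Proof.
move=> h; rewrite /coprime => H.
have e : r - (r - a) = a by lia.
rewrite gcdnC -gcd_sub ?leq_subr // e gcdnC gcd_sub // gcdnC //.
Qed.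

Lemma cop_pos k m : 1 < k -> coprime k m -> 0 < m %% k.
Proof.
move=> hk hc; rewrite lt0n; apply/negP => /eqP h0.
move: hc; rewrite -coprime_modr h0 /coprime gcdn0 => /eqP; lia.
Qed.

Lemma tau_f_surj f : forall r a, r <= f -> 1 < r -> 0 < a < r -> coprime r a ->
  forall j, j < r -> exists2 i, i < r & tau_f f r a i = j.
Proof.
elim: f => [|f IH] r a hf hr /andP[ha0 har] hc j hj; first lia.
rewrite /=.
have [a1|an1] := eqVneq a 1.
  subst a. have [hj1|hj1] := ltnP j.+1 r.
    exists j.+1 => //=. rewrite mul1n.
    have -> : j.+1 + r.-1 = j + r by lia.
    by rewrite modnDr modn_small.
  exists 0; first lia. rewrite /= muln0 add0n modn_small; lia.
have [ar|anr] := eqVneq a r.-1.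
  subst a. rewrite /=. exists (r.-1 - j); first lia.
  have -> : r.-1 * (r.-1 - j) + r.-1 = (r.-1 - j) * r + j.
    case: r hr hj {hf hc har ha0 an1} => [|m] //= _ hj.
    have [t ->] : exists t, m = j + t by exists (m - j); lia.
    have -> : j + t - j = t by lia.
    nia.
  by rewrite modnMDl modn_small.
rewrite /=.
have ha2 : 1 < a by lia.
have har2 : a < r.-1 by lia.
have [hjl|hjl] := ltnP j (r - a).
- set d := r - a.
  have hd : 1 < d by lia.
  have cd : coprime d r.
    by rewrite coprime_sym /d cop_sub // ltnW.
  have hpos : 0 < r %% d by apply: cop_pos.
  have [i' hi' ei'] := IH d (r %% d) ltac:(lia) hd
     ltac:(by rewrite hpos ltn_pmod //; lia) ltac:(by rewrite coprime_modr) j hjl.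
  set b := a %% d.
  have hb : b < d by rewrite ltn_pmod //; lia.
  have ea : a = a %/ d * d + b by rewrite /b -divn_eq.
  exists (a + (i' + (d - b)) %% d).
    have := ltn_pmod (i' + (d - b)) (ltnW hd). lia.
  rewrite leq_addr.
  have -> : (a + (i' + (d - b)) %% d) %% d = i'.
    rewrite modnDmr.
    have -> : a + (i' + (d - b)) = (a %/ d).+1 * d + i' by rewrite mulSn; lia.
    by rewrite modnMDl modn_small.
  exact: ei'.
- have ca : coprime a r by rewrite coprime_sym.
  have hpos : 0 < r %% a by apply: cop_pos.
  have hlt : r %% a < a by apply: ltn_pmod; lia.
  have ea'' : (a - r %% a) %% a = a - r %% a by rewrite modn_small //; lia.
  have [i hi ei] := IH a ((a - r %% a) %% a) ltac:(lia) ha2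
     ltac:(rewrite ea''; lia)
     ltac:(by rewrite ea''; apply: cop_sub; [exact: ltnW | rewrite coprime_modr])
     (j - (r - a)) ltac:(lia).
  exists i; first lia.
  have -> : (a <= i) = false by apply/negbTE; rewrite -ltnNge.
  rewrite ei; lia.
Qed.
Definition pos (r d x n : nat) := (x + n.+1 * d) %% r.

Lemma pos_lt r d x n : 0 < r -> pos r d x n < r.
Proof. by move=> h; rewrite /pos ltn_pmod. Qed.

Lemma pos_inj r d x m n : coprime r d -> m < r -> n < r ->
  pos r d x m = pos r d x n -> m = n.
Proof.
move=> hc.
wlog hmn : m n / m <= n.
  move=> W hm hn e; case: (leqP m n) => h; first exact: W.
  by symmetry; apply: W => //; exact: ltnW.
move=> hm hn /eqP; rewrite /pos eq_sym eqn_modDl eqn_mod_dvd; last by rewrite leq_mul2r ltnS hmn orbT.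
rewrite -mulnBl Gauss_dvdl //.
have [h0|hp] := posnP (n.+1 - m.+1); first lia.
move/(dvdn_leq hp); lia.
Qed.

Lemma pos_add r d x n m : (pos r d x n + m * d) %% r = pos r d x (n + m).
Proof. by rewrite /pos modnDml -addnA -mulnDl addSn. Qed.

Lemma pos_last r d x : 0 < r -> x < r -> pos r d x r.-1 = x.
Proof. by move=> h hx; rewrite /pos prednK // addnC mulnC modnMDl modn_small. Qed.

Lemma pos_step r d x n : (pos r d x n + d) %% r = pos r d x n.+1.
Proof. by have := pos_add r d x n 1; rewrite mul1n addn1. Qed.

Lemma pos_back r a x n : a <= r -> (pos r (r - a) x n.+1 + a) %% r = pos r (r - a) x n.
Proof.
move=> h; rewrite /pos modnDml.
have -> : x + n.+2 * (r - a) + a = x + n.+1 * (r - a) + r.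
  rewrite [n.+2 * _]mulSn; lia.
by rewrite modnDr.
Qed.

Lemma pos_back0 r a x : a <= r -> x < r -> (pos r (r - a) x 0 + a) %% r = x.
Proof.
move=> h hx; rewrite /pos modnDml mul1n.
have -> : x + (r - a) + a = x + r by lia.
by rewrite modnDr modn_small.
Qed.

Lemma find_iota_eq (p : pred nat) n k : k < n -> p k ->
  (forall m, m < k -> ~~ p m) -> find p (iota 0 n) = k.
Proof.
move=> hk pk hb.
have hh : has p (iota 0 n) by apply/hasP; exists k => //; rewrite mem_iota.
have hf : find p (iota 0 n) < n by rewrite -[X in _ < X](size_iota 0 n) -has_find.
case: (ltngtP (find p (iota 0 n)) k) => // h.
  have := nth_find 0 hh; rewrite nth_iota // add0n => pf.
  by move: (hb _ h); rewrite pf.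
have := before_find 0 h; rewrite nth_iota // add0n => pf.
by rewrite pf in pk.
Qed.

Lemma W_char r a j k (hr : 0 < r) (hc : coprime r (r - a)) (hk : k < r) (v : 'I_r) :
  (v \in Wset r a (pos r (r-a) (xi r a j) k) j) =
  [exists m : 'I_r, (m <= k) && (val v == pos r (r-a) (xi r a j) m)].
Proof.
rewrite /Wset inE /=.
rewrite (@find_iota_eq _ r k) //; last first.
  move=> m hm; apply/eqP => e.
  have := @pos_inj r (r - a) (xi r a j) m k hc ltac:(lia) hk e; lia.
apply/existsP/existsP => [[m /eqP e]|[m /andP[hm /eqP e]]].
  have hm : m < r by have := ltn_ord m; lia.
  exists (Ordinal hm); apply/andP; split; first by have := ltn_ord m; rewrite /=; lia.
  by apply/eqP; rewrite e.
have hm' : m < k.+1 by lia.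
by exists (Ordinal hm'); apply/eqP; rewrite e.
Qed.

Lemma V_char r a j k (hr : 0 < r) (hc : coprime r (r - a)) (hx : xi r a j < r)
  (hk : k < r) (v : 'I_r) :
  (v \in Vset r a (pos r (r-a) (xi r a j) k) j) =
  [exists m : 'I_r, (k <= m) && (val v == pos r (r-a) (xi r a j) m)].
Proof.
rewrite /Vset inE /=.
rewrite (@find_iota_eq _ r (r.-1 - k)); first last.
- move=> m hm; rewrite pos_add; apply/eqP => e.
  rewrite -{2}(pos_last (r - a) hr hx) in e.
  have h1 : k + m < r by lia.
  have h2 : r.-1 < r by lia.
  have := @pos_inj r (r - a) (xi r a j) _ _ hc h1 h2 e; lia.
- by rewrite pos_add; apply/eqP; rewrite -{2}(pos_last (r - a) hr hx); congr pos; lia.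
- lia.
apply/existsP/existsP => [[m /eqP e]|[m /andP[hm /eqP e]]].
  rewrite pos_add in e.
  have hm : k + m < r by have := ltn_ord m; lia.
  exists (Ordinal hm); apply/andP; split; first by rewrite /= leq_addr.
  by apply/eqP; rewrite e.
have hm' : m - k < (r.-1 - k).+1 by have := ltn_ord m; lia.
exists (Ordinal hm'); apply/eqP; rewrite e /= pos_add; congr pos; lia.
Qed.

From mathcomp Require Import ring lra.
Import Order.TTheory GRing.Theory Num.Theory.

Lemma xi_spec r a j : 1 < r -> 0 < a < r -> coprime r a -> j < r ->
  xi r a j < r /\ tau r a (xi r a j) = j.
Proof.
move=> hr ha hc hj.
have [i hi ei] := tau_f_surj (leqnn r) hr ha hc hj.
have hh : has (fun i => tau r a i == j) (iota 0 r).
  by apply/hasP; exists i; [rewrite mem_iota; lia | apply/eqP].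
have hf : xi r a j < r by rewrite /xi -[X in _ < X](size_iota 0 r) -has_find.
split => //.
have := nth_find 0 hh; rewrite nth_iota // add0n => /eqP //.
Qed.

Local Open Scope ring_scope.
Lemma abel (s : nat -> bool) (t : nat -> rat) n :
  (\sum_(k < n) (((s k : nat)%:R - (s k.+1 : nat)%:R) * \sum_(m < k.+1) t m)
  = \sum_(k < n.+1) (s k : nat)%:R * t k - (s n : nat)%:R * \sum_(m < n.+1) t m).
Proof.
elim: n => [|n IH]; first by rewrite big_ord0 !big_ord1; ring.
rewrite big_ord_recr IH /= [\sum_(k < n.+2) (s k : nat)%:R * t k]big_ord_recr [\sum_(m < n.+2) t m]big_ord_recr /=.
ring.
Qed.
Local Close Scope ring_scope.

Definition posO r d x (hr : 0 < r) n : 'I_r := Ordinal (pos_lt d x n hr).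

Lemma reidx r (A : {set 'I_r}) (h : 'I_r -> 'I_r) (hinj : injective h) (th : 'I_r -> rat) :
  theta_of th A = (\sum_(k | h k \in A) th (h k))%R.
Proof. by rewrite /theta_of (reindex_inj hinj). Qed.

Lemma sum_prefix r k0 (F : nat -> rat) : k0 < r ->
  (\sum_(k < r | (k <= k0)%N) F k = \sum_(k < k0.+1) F k)%R.
Proof.
move=> hk.
rewrite -(big_mkord (fun k => k <= k0) F) -(big_mkord xpredT F) (big_nat_widen _ _ _ _ _ (hk : k0.+1 <= r)).
by apply: eq_bigl => k.
Qed.

Lemma repx0 r a j i : rep_x (Frep r a j) i = 0%R.
Proof. by rewrite /= /fixval /Xdiv /= big1. Qed.

Lemma repy0 r a j : a <= r -> xi r a j < r -> tau r a (xi r a j) = j ->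
  rep_y (Frep r a j) (pos r (r-a) (xi r a j) 0) = 0%R.
Proof. by move=> ha hx ht; rewrite /= /fixval /= pos_back0 // ht leqnn. Qed.

Lemma repz0 r a j : xi r a j < r -> tau r a (xi r a j) = j -> j < r ->
  rep_z (Frep r a j) (xi r a j) = 0%R.
Proof.
move=> hx ht hj; rewrite /= /fixval /= (modn_small hx) ht ltnn ltnSn /=.
by rewrite hj.
Qed.

Lemma Wsub r a j (hr0 : 0 < r) (ha : a <= r) (hc : coprime r (r - a))
  (hx : xi r a j < r) (ht : tau r a (xi r a j) = j) (hj : j < r)
  (S : {set 'I_r}) (hS : is_subrep a (Frep r a j) S) k0 (hk : k0.+1 < r)
  (in1 : posO (r - a) (xi r a j) hr0 k0 \in S)
  (out : posO (r - a) (xi r a j) hr0 k0.+1 \notin S) :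
  is_subrep a (Frep r a j) (Wset r a (pos r (r-a) (xi r a j) k0) j).
Proof.
move=> i v; rewrite !W_char //; try lia.
case/existsP => -[m hmr] /andP[hm /eqP ei] H; move: hm ei => /= hm ei.
case: H => [[hX _]|[[hY ev]|[hZ ev]]].
- by rewrite repx0 eqxx in hX.
- move: hY ev; rewrite ei; case: m hmr hm ei => [|m'] hmr hm ei.
    by rewrite repy0 // eqxx.
  move=> _ ev; apply/existsP.
  have hm'r : m' < r by lia.
  exists (Ordinal hm'r); apply/andP; split; first by rewrite /=; lia.
  by rewrite ev pos_back.
- move: (ev); rewrite ei pos_step => ev2.
  case: (ltnP m k0) => hmk.
    have hm1 : m.+1 < r by lia.
    by apply/existsP; exists (Ordinal hm1); apply/andP; split => //; rewrite ev2.
  have eik : i = posO (r - a) (xi r a j) hr0 k0.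
    by apply: val_inj; rewrite /= ei; congr pos; lia.
  have evk : v = posO (r - a) (xi r a j) hr0 k0.+1.
    by apply: val_inj; rewrite /= ev2; congr pos; lia.
  have := hS i v; rewrite eik in1 => /(_ isT).
  move=> H; have : v \in S by apply: H; right; right; rewrite -eik; split.
  by rewrite evk (negbTE out).
Qed.

Lemma Vsub r a j (hr0 : 0 < r) (ha : a <= r) (hc : coprime r (r - a))
  (hx : xi r a j < r) (ht : tau r a (xi r a j) = j) (hj : j < r)
  (S : {set 'I_r}) (hS : is_subrep a (Frep r a j) S) k0 (hk : k0.+1 < r)
  (out : posO (r - a) (xi r a j) hr0 k0 \notin S)
  (in1 : posO (r - a) (xi r a j) hr0 k0.+1 \in S) :
  is_subrep a (Frep r a j) (Vset r a (pos r (r-a) (xi r a j) k0.+1) j).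
Proof.
move=> i v; rewrite !V_char //.
case/existsP => -[m hmr] /andP[hm /eqP ei] H; move: hm ei => /= hm ei.
case: H => [[hX _]|[[hY ev]|[hZ ev]]].
- by rewrite repx0 eqxx in hX.
- move: (ev); rewrite ei; case: m hmr hm ei => [|m'] hmr hm ei; first lia.
  rewrite pos_back // => ev2.
  case: (ltnP k0 m') => hmk.
    have hm'r : m' < r by lia.
    by apply/existsP; exists (Ordinal hm'r); apply/andP; split => //; rewrite ev2.
  have eik : i = posO (r - a) (xi r a j) hr0 k0.+1.
    by apply: val_inj; rewrite /= ei; congr pos; lia.
  have evk : v = posO (r - a) (xi r a j) hr0 k0.
    by apply: val_inj; rewrite /= ev2; congr pos; lia.
  have := hS i v; rewrite eik in1 => /(_ isT).
  move=> H; have : v \in S by apply: H; right; left; rewrite -eik; split.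
  by rewrite evk (negbTE out).
- move: (ev); rewrite ei pos_step => ev2.
  case: (ltnP m.+1 r) => hmk.
    by apply/existsP; exists (Ordinal hmk); apply/andP; split => //; [rewrite /=; lia | rewrite ev2].
  have em : m = r.-1 by lia.
  by move: hZ; rewrite ei em pos_last // repz0 // eqxx.
Qed.

Lemma posO_inj r d x (hr0 : 0 < r) (hc : coprime r d) :
  injective (fun k : 'I_r => posO d x hr0 k).
Proof.
move=> k1 k2 /(congr1 val) /= e; apply: val_inj.
exact: (pos_inj hc (ltn_ord _) (ltn_ord _) e).
Qed.

Lemma Wsum r a j (hr0 : 0 < r) (hc : coprime r (r - a)) (th : 'I_r -> rat) k0 (hk : k0 < r) :
  theta_of th (Wset r a (pos r (r-a) (xi r a j) k0) j) =
  (\sum_(m < k0.+1) th (posO (r-a) (xi r a j) hr0 m))%R.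
Proof.
rewrite (reidx _ (@posO_inj _ (r - a) (xi r a j) hr0 hc)) -(@sum_prefix r k0 (fun n => th (posO (r-a) (xi r a j) hr0 n)) hk).
apply: eq_bigl => k /=; rewrite W_char //.
apply/existsP/idP => [[m /andP[hm /eqP e]]|hk'].
  by have := pos_inj hc (ltn_ord k) (ltn_ord m) e => ->.
by exists k; rewrite hk' /=.
Qed.

Lemma Vsum r a j (hr0 : 0 < r) (hc : coprime r (r - a)) (hx : xi r a j < r)
  (th : 'I_r -> rat) k0 (hk : k0.+1 < r) :
  theta_of th (Vset r a (pos r (r-a) (xi r a j) k0.+1) j) =
  (\sum_(k < r) th (posO (r-a) (xi r a j) hr0 k)
   - \sum_(m < k0.+1) th (posO (r-a) (xi r a j) hr0 m))%R.
Proof.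
rewrite (reidx _ (@posO_inj _ (r - a) (xi r a j) hr0 hc)) -(@sum_prefix r k0 (fun n => th (posO (r-a) (xi r a j) hr0 n)) (ltnW hk)).
rewrite (bigID (fun k : 'I_r => (k <= k0)%N) xpredT) /=.
have -> : (\sum_(i < r | (i <= k0)%N) th (posO (r - a) (xi r a j) hr0 i) =
   \sum_(i < r | true && (i <= k0)%N) th (posO (r - a) (xi r a j) hr0 i))%R by [].
rewrite addrC addrK.
apply: eq_bigl => k /=; rewrite (@V_char r a j k0.+1 hr0 hc hx hk).
apply/existsP/idP => [[m /andP[hm /eqP e]]|hk'].
  by have := pos_inj hc (ltn_ord k) (ltn_ord m) e => ->; rewrite -ltnNge.
by exists k; rewrite -ltnNge in hk'; rewrite hk' /=.
Qed.

Lemma switch (s : nat -> bool) n k1 k2 : k1 <= n -> k2 <= n -> s k1 -> ~~ s k2 ->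
  exists k, k < n /\ s k != s k.+1.
Proof.
move=> h1 h2 s1 s2.
case: (boolP [exists k : 'I_n, s k != s k.+1]) => [/existsP[k hk]|]; first by exists k.
rewrite negb_exists => /forallP H.
have all : forall k, k <= n -> s k = s 0.
  elim => // k IH hk; rewrite -IH; last lia.
  have := H (Ordinal hk); rewrite negbK => /eqP //.
by move: s2; rewrite all // -(all k1) // s1.
Qed.

Theorem mainTheorem15 (r a : nat) (hr : 1 < r) (ha0 : 0 < a) (har : a < r)
  (hcop : coprime r a) (theta : 'I_r -> rat)
  (htheta : (\sum_(i < r) theta i = 0)%R) (j : 'I_r) :
  (stable a theta (Frep r a j) <->
     ((forall i : 'I_r, Vset r a i j != set0 -> Vset r a i j != setT ->
         is_subrep a (Frep r a j) (Vset r a i j) ->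
         (0 < theta_of theta (Vset r a i j))%R) /\
      (forall i : 'I_r, Wset r a i j != set0 -> Wset r a i j != setT ->
         is_subrep a (Frep r a j) (Wset r a i j) ->
         (0 < theta_of theta (Wset r a i j))%R))) /\
  (semistable a theta (Frep r a j) <->
     ((forall i : 'I_r, Vset r a i j != set0 -> Vset r a i j != setT ->
         is_subrep a (Frep r a j) (Vset r a i j) ->
         (0 <= theta_of theta (Vset r a i j))%R) /\
      (forall i : 'I_r, Wset r a i j != set0 -> Wset r a i j != setT ->
         is_subrep a (Frep r a j) (Wset r a i j) ->
         (0 <= theta_of theta (Wset r a i j))%R))).
Proof.
have hr0 : 0 < r by lia.
have har' : a <= r by lia.
have hc : coprime r (r - a) by apply: cop_sub.
have ha : 0 < a < r by rewrite ha0 har.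
have [hx ht] := xi_spec hr ha hcop (ltn_ord j).
pose h n := posO (r - a) (xi r a j) hr0 n.
have hinj : injective (fun k : 'I_r => h k) := @posO_inj _ (r - a) (xi r a j) hr0 hc.
have tot : (\sum_(k < r) theta (h k) = 0)%R.
  by move: htheta; rewrite (reindex_inj hinj).
have [g hg1 hg2] := injF_bij hinj.
pose c (S : {set 'I_r}) (k : nat) :=
  ((((h k \in S) : nat)%:R - ((h k.+1 \in S) : nat)%:R) * \sum_(m < k.+1) theta (h m))%R.
pose GV (q : rat) := exists i : 'I_r, [/\ Vset r a i j != set0, Vset r a i j != setT,
   is_subrep a (Frep r a j) (Vset r a i j) & q = theta_of theta (Vset r a i j)].
pose GW (q : rat) := exists i : 'I_r, [/\ Wset r a i j != set0, Wset r a i j != setT,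
   is_subrep a (Frep r a j) (Wset r a i j) & q = theta_of theta (Wset r a i j)].
have key : forall S, theta_of theta S = (\sum_(k < r.-1) c S k)%R.
  move=> S; rewrite (reidx S hinj) big_mkcond /=.
  have := abel (fun n => h n \in S) (fun n => theta (h n)) r.-1.
  rewrite prednK // tot mulr0 subr0 /c => ->.
  by apply: eq_bigr => k _; case: (h k \in S); rewrite ?mul1r ?mul0r.
have hW0 : forall k, k < r -> h k \in Wset r a (h k) j.
  by move=> k hk; rewrite W_char //; apply/existsP; exists (Ordinal hk); rewrite /= leqnn eqxx.
have term : forall S, is_subrep a (Frep r a j) S -> forall k, k.+1 < r ->
   [/\ (h k \in S) = (h k.+1 \in S) -> c S k = 0%R,
       (h k \in S) -> (h k.+1 \notin S) -> GW (c S k) &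
       (h k \notin S) -> (h k.+1 \in S) -> GV (c S k)].
  move=> S hS k hk; split.
  - by move=> e; rewrite /c e subrr mul0r.
  - move=> e1 e2; exists (h k); rewrite /c e1 (negbTE e2) /= subr0 mul1r.
    have hk' : k < r by lia.
    split.
    + by apply/set0Pn; exists (h k); apply: hW0.
    + apply/negP => /eqP e; have := in_setT (h k.+1); rewrite -e W_char //.
      case/existsP => m /andP[hm /eqP em].
      have := pos_inj hc hk (ltn_ord m) em; lia.
    + exact: (@Wsub r a j hr0 har' hc hx ht (ltn_ord j) S hS k hk e1 e2).
    + by rewrite (Wsum j hr0 hc theta hk').
  - move=> e1 e2; exists (h k.+1); rewrite /c (negbTE e1) e2 /= sub0r mulN1r.
    split.
    + by apply/set0Pn; exists (h k.+1); rewrite V_char //; apply/existsP; exists (Ordinal hk); rewrite /= leqnn eqxx.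
    + apply/negP => /eqP e; have := in_setT (h k); rewrite -e V_char //.
      case/existsP => m /andP[hm /eqP em].
      have := pos_inj hc (ltnW hk) (ltn_ord m) em; lia.
    + exact: (@Vsub r a j hr0 har' hc hx ht (ltn_ord j) S hS k hk e1 e2).
    + by rewrite (@Vsum r a j hr0 hc hx theta k hk) tot sub0r.
have ex : forall S, S != set0 -> S != setT -> is_subrep a (Frep r a j) S ->
    exists k : 'I_r.-1, GV (c S k) \/ GW (c S k).
  move=> S hS0 hST hS.
  have [v hv] := set0Pn _ hS0.
  have [w hw] : exists w, w \notin S.
    case: (boolP [exists w, w \notin S]) => [/existsP//|].
    rewrite negb_exists => /forallP H; exfalso; move/negP: hST; apply.
    by apply/eqP/setP => w; rewrite in_setT; have := H w; rewrite negbK.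
  have [k [hk hsw]] := @switch (fun n => h n \in S) r.-1 (g v) (g w)
     ltac:(have := ltn_ord (g v); lia) ltac:(have := ltn_ord (g w); lia)
     ltac:(by rewrite /= hg2) ltac:(by rewrite /= hg2).
  have hk1 : k.+1 < r by lia.
  have [_ T2 T3] := term S hS k hk1.
  exists (Ordinal hk) => /=.
  move: hsw; case e1: (h k \in S); case e2: (h k.+1 \in S) => //= _.
    by right; apply: T2; rewrite ?e1 ?e2.
  by left; apply: T3; rewrite ?e1 ?e2.
have each : forall S, is_subrep a (Frep r a j) S -> forall k : 'I_r.-1,
    c S k = 0%R \/ GV (c S k) \/ GW (c S k).
  move=> S hS k.
  have hk1 : k.+1 < r by have := ltn_ord k; lia.
  have [T1 T2 T3] := term S hS k hk1.
  case e1: (h k \in S); case e2: (h k.+1 \in S).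
  - by left; apply: T1; rewrite e1 e2.
  - by right; right; apply: T2; rewrite ?e1 ?e2.
  - by right; left; apply: T3; rewrite ?e1 ?e2.
  - by left; apply: T1; rewrite e1 e2.
split; split.
- move=> hst; split => i h1 h2 h3; exact: hst.
- move=> [HV HW] S hS0 hST hS.
  have nn : forall k : 'I_r.-1, (0 <= c S k)%R.
    move=> k; case: (each S hS k) => [->//|[[i [? ? ? ->]]|[i [? ? ? ->]]]].
    + by apply: ltW; apply: HV.
    + by apply: ltW; apply: HW.
  have [k0 hk0] := ex S hS0 hST hS.
  have pk0 : (0 < c S k0)%R.
    by case: hk0 => [[i [? ? ? ->]]|[i [? ? ? ->]]]; [apply: HV | apply: HW].
  rewrite key (bigD1 k0) //=.
  have := @sumr_ge0 _ _ (index_enum 'I_r.-1) (fun k => k != k0) (c S) (fun k _ => nn k).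
  lra.
- move=> hst; split => i h1 h2 h3; exact: hst.
- move=> [HV HW] S hS0 hST hS.
  rewrite key; apply: sumr_ge0 => k _.
  by case: (each S hS k) => [->//|[[i [? ? ? ->]]|[i [? ? ? ->]]]]; [apply: HV | apply: HW].
Qed.
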